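(* Let $h:[0,r_0]\to[0,\infty)$ be a continuous increasing function with $h(0)=0$ such that $\sum_{n=N}^\infty n\,h\!\left(n^{-n^2}\right)<+\infty$ (for some $N$ with $N^{-N^2}\leq r_0$). Then $\mathcal{H}^h(\mathcal{S})=0$. Moreover, $\mathcal{S}$ contains a dense $G_\delta$ subset of $(0,1)$; in particular $\mathcal{S}$ is uncountable.
   Context: For $\alpha\in(0,1)\setminus\mathbb{Q}$ let $p_s/q_s$ be its continued fraction convergents ($\alpha=[0;a_1,a_2,\dots]$, $q_s=a_sq_{s-1}+q_{s-2}$, $q_0=1$, $q_{-1}=0$). Define $\mathcal{S}=\left\{\alpha\in(0,1)\setminus\mathbb{Q}:\ \limsup_{s\to\infty}\frac{\log q_{s+1}}{q_s^2\log q_s}=+\infty\right\}$. For $E\subset\mathbb{C}$ and $\delta>0$, $\mathcal{H}^h_\delta(E)=\inf\sum_n h(\operatorname{diam}A_n/2)$, the infimum over all countable coverings of $E$ by bounded sets $A_n$ of diameter less than $\delta$; the Hausdorff $h$-measure is $\mathcal{H}^h(E)=\lim_{\delta\to0}\mathcal{H}^h_\delta(E)$. *)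

(* Defs.v *)
From Stdlib Require Import Reals.
Open Scope R_scope.

(* Gauss-map remainders: x_0 = alpha, x_{s+1} = 1/x_s - floor(1/x_s).
   Int_part r = up r - 1 is the floor of r. *)
Fixpoint cf_rem (alpha : R) (s : nat) : R :=
  match s with
  | O => alpha
  | S s' => let x := cf_rem alpha s' in / x - IZR (Int_part (/ x))
  end.

Definition cf_a_succ (alpha : R) (s : nat) : Z := Int_part (/ cf_rem alpha s).

(* cf_qq alpha s = (q_{s-1}, q_s), with q_{-1} = 0, q_0 = 1,
   q_{s+1} = a_{s+1} q_s + q_{s-1}. *)
Fixpoint cf_qq (alpha : R) (s : nat) : R * R :=
  match s with
  | O => (0, 1)
  | S s' => let (qm, q) := cf_qq alpha s' in
            (q, IZR (cf_a_succ alpha s') * q + qm)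
  end.

Definition cf_q (alpha : R) (s : nat) : R := snd (cf_qq alpha s).

Definition irrational (x : R) : Prop :=
  ~ exists (p q : Z), q <> 0%Z /\ x = IZR p / IZR q.

Definition S_set (alpha : R) : Prop :=
  0 < alpha < 1 /\ irrational alpha /\
  forall (M : R) (s0 : nat), exists s : nat, (s0 <= s)%nat /\
     ln (cf_q alpha (S s)) / ((cf_q alpha s) ^ 2 * ln (cf_q alpha s)) > M.

Definition C := (R * R)%type.

Definition cdist (z w : C) : R :=
  sqrt ((fst z - fst w) ^ 2 + (snd z - snd w) ^ 2).

(* d is the diameter of A: least nonnegative bound of pairwise distances
   (so A is bounded; the empty set has diameter 0). *)
Definition is_diam (A : C -> Prop) (d : R) : Prop :=
  0 <= d /\
  (forall z w, A z -> A w -> cdist z w <= d) /\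
  (forall d', 0 <= d' -> (forall z w, A z -> A w -> cdist z w <= d') -> d <= d').

(* H^h_delta(E) <= c : for every eta > 0 there is a countable covering of E
   by bounded sets A_n of diameter d_n < delta with sum h(d_n/2) <= c + eta. *)
Definition Hdelta_le (h : R -> R) (delta : R) (E : C -> Prop) (c : R) : Prop :=
  forall eta, 0 < eta ->
  exists (A : nat -> C -> Prop) (d : nat -> R) (l : R),
    (forall n, is_diam (A n) (d n) /\ d n < delta) /\
    (forall z, E z -> exists n, A n z) /\
    infinite_sum (fun n => h (d n / 2)) l /\
    l <= c + eta.

Definition Hausdorff_zero (h : R -> R) (E : C -> Prop) : Prop :=
  forall eps, 0 < eps -> exists delta0, 0 < delta0 /\
    forall delta, 0 < delta < delta0 -> Hdelta_le h delta E eps.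

Definition embedC (X : R -> Prop) : C -> Prop :=
  fun z => exists x, X x /\ z = (x, 0).

Definition is_G_delta (G : R -> Prop) : Prop :=
  exists U : nat -> R -> Prop,
    (forall n, open_set (U n)) /\ (forall x, G x <-> forall n, U n x).

Definition dense_in_01 (G : R -> Prop) : Prop :=
  forall a b, 0 <= a -> a < b -> b <= 1 -> exists x, a < x < b /\ G x.

Definition countable_set (X : R -> Prop) : Prop :=
  exists f : nat -> R, forall x, X x -> exists n, f n = x.

(* Main.v *)
Require Import Defs.
From Stdlib Require Import Reals.
Open Scope R_scope.
From Stdlib Require Import Lra Lia Psatz ZArith Arith List Classical.
Open Scope R_scope.


Fixpoint beta (w : list nat) (y : R) : R :=
  match w with nil => y | a :: w' => beta w' (/ (INR a + y)) end.
Fixpoint cq (w : list nat) : nat * nat :=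
  match w with nil => (0%nat, 1%nat)
  | a :: w' => (snd (cq w'), (a * snd (cq w') + fst (cq w'))%nat) end.
Fixpoint cp (w : list nat) : nat * nat :=
  match w with nil => (1%nat, 0%nat)
  | a :: w' => (snd (cp w'), (a * snd (cp w') + fst (cp w'))%nat) end.
Fixpoint posw (w : list nat) : Prop :=
  match w with nil => True | a :: w' => (1 <= a)%nat /\ posw w' end.

Lemma Int_part_shift : forall (k : Z) y, 0 <= y < 1 -> Int_part (IZR k + y) = k.
Proof.
  intros k y Hy. unfold Int_part.
  rewrite <- (tech_up (IZR k + y) (k + 1)); [ring| |]; rewrite plus_IZR; lra.
Qed.

Lemma cf_beta : forall w, posw w -> forall y, 0 < y < 1 ->
  cf_rem (beta w y) (length w) = y /\
  cf_qq (beta w y) (length w) = (INR (fst (cq w)), INR (snd (cq w))).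
Proof.
  induction w as [|a w IH]; intros Hp y Hy.
  - simpl. split; reflexivity.
  - destruct Hp as [Ha Hp]. simpl beta. simpl length.
    assert (Ha' : 1 <= INR a) by (apply (le_INR 1); lia).
    assert (Hz : 0 < / (INR a + y) < 1).
    { split. apply Rinv_0_lt_compat; lra.
      rewrite <- Rinv_1. apply Rinv_lt_contravar; lra. }
    destruct (IH Hp _ Hz) as [H1 H2].
    assert (Hi : Int_part (/ / (INR a + y)) = Z.of_nat a).
    { rewrite Rinv_inv, INR_IZR_INZ. apply Int_part_shift; lra. }
    split.
    + simpl. rewrite H1, Hi, Rinv_inv, <- INR_IZR_INZ. ring.
    + simpl. rewrite H2. unfold cf_a_succ. rewrite H1, Hi, <- INR_IZR_INZ.
      f_equal. rewrite plus_INR, mult_INR. ring.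
Qed.


Lemma cq_facts : forall w, posw w ->
  (length w <= snd (cq w))%nat /\ (1 <= snd (cq w))%nat /\
  (w <> nil -> 1 <= fst (cq w))%nat /\ (fst (cq w) <= snd (cq w))%nat.
Proof.
  induction w as [|a w IH]; intros Hp.
  - simpl. repeat split; try lia. intros H; congruence.
  - destruct Hp as [Ha Hp]. destruct (IH Hp) as [H1 [H2 [H3 H4]]].
    simpl. destruct w as [|b w'].
    + simpl in *. repeat split; try lia; nia.
    + assert (1 <= fst (cq (b :: w')))%nat by (apply H3; congruence).
      simpl length in *. repeat split; try lia; nia.
Qed.

Lemma cpq_det : forall w,
  INR (fst (cp w)) * INR (snd (cq w)) - INR (snd (cp w)) * INR (fst (cq w)) = (-1) ^ length w.
Proof.
  induction w as [|a w IH].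
  - simpl. ring.
  - simpl length. simpl fst. simpl snd. rewrite !plus_INR, !mult_INR.
    simpl pow. rewrite <- IH. ring.
Qed.

Lemma beta_mob : forall w, posw w -> forall y, 0 <= y ->
  beta w y = (INR (snd (cp w)) + INR (fst (cp w)) * y) / (INR (snd (cq w)) + INR (fst (cq w)) * y).
Proof.
  induction w as [|a w IH]; intros Hp y Hy.
  - simpl. field.
  - destruct Hp as [Ha Hp]. simpl beta.
    assert (Ha' : 1 <= INR a) by (apply (le_INR 1); lia).
    assert (Hz : 0 <= / (INR a + y)) by (left; apply Rinv_0_lt_compat; lra).
    rewrite (IH Hp _ Hz).
    destruct (cq_facts w Hp) as [_ [H2 _]].
    assert (Q1 : 1 <= INR (snd (cq w))) by (apply (le_INR 1); lia).
    assert (Q0 : 0 <= INR (fst (cq w))) by apply pos_INR.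
    simpl fst; simpl snd. rewrite !plus_INR, !mult_INR.
    field. split; [|lra].
    assert (0 <= INR (fst (cq w)) * y) by (apply Rmult_le_pos; lra).
    nra.
Qed.

Lemma den_pos : forall w, posw w -> forall y, 0 <= y ->
  INR (snd (cq w)) <= INR (snd (cq w)) + INR (fst (cq w)) * y.
Proof.
  intros w Hp y Hy. assert (0 <= INR (fst (cq w))) by apply pos_INR.
  assert (0 <= INR (fst (cq w)) * y) by (apply Rmult_le_pos; lra). lra.
Qed.

Lemma q_ge1 : forall w, posw w -> 1 <= INR (snd (cq w)).
Proof. intros w Hp. destruct (cq_facts w Hp) as [_ [H _]]. apply (le_INR 1); lia. Qed.

Lemma beta_diff : forall w, posw w -> forall y y', 0 <= y -> 0 <= y' ->
  beta w y - beta w y' = (-1) ^ length w * (y - y') /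
     ((INR (snd (cq w)) + INR (fst (cq w)) * y) * (INR (snd (cq w)) + INR (fst (cq w)) * y')).
Proof.
  intros w Hp y y' Hy Hy'. rewrite !(beta_mob w Hp) by assumption.
  rewrite <- cpq_det.
  pose proof (den_pos w Hp y Hy). pose proof (den_pos w Hp y' Hy'). pose proof (q_ge1 w Hp).
  field. lra.
Qed.

Lemma sign_cases : forall n, (-1) ^ n = 1 \/ (-1) ^ n = -1.
Proof. induction n; simpl; [left; ring|destruct IHn as [H|H]; rewrite H; [right|left]; ring]. Qed.

Lemma beta_absdiff : forall w, posw w -> forall y y', 0 <= y -> 0 <= y' ->
  Rabs (beta w y - beta w y') = Rabs (y - y') /
     ((INR (snd (cq w)) + INR (fst (cq w)) * y) * (INR (snd (cq w)) + INR (fst (cq w)) * y')).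
Proof.
  intros. rewrite beta_diff by assumption.
  pose proof (den_pos w H y H0). pose proof (den_pos w H y' H1). pose proof (q_ge1 w H).
  unfold Rdiv. rewrite Rabs_mult, Rabs_mult, (Rabs_right (/ _)).
  assert (Rabs ((-1) ^ length w) = 1) as E by (destruct (sign_cases (length w)) as [E|E]; rewrite E; [apply Rabs_R1| rewrite Rabs_left; lra]).
  rewrite E; ring.
  left. apply Rinv_0_lt_compat. apply Rmult_lt_0_compat; lra.
Qed.

Lemma beta_lip : forall w, posw w -> forall y y', 0 <= y -> 0 <= y' ->
  Rabs (beta w y - beta w y') <= Rabs (y - y') / INR (snd (cq w)).
Proof.
  intros. rewrite beta_absdiff by assumption.
  pose proof (den_pos w H y H0). pose proof (den_pos w H y' H1). pose proof (q_ge1 w H).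
  unfold Rdiv. apply Rmult_le_compat_l. apply Rabs_pos.
  apply Rinv_le_contravar. lra. nra.
Qed.

Lemma beta_mono : forall w, posw w ->
  (forall y y', 0 <= y -> y < y' -> beta w y < beta w y') \/
  (forall y y', 0 <= y -> y < y' -> beta w y' < beta w y).
Proof.
  intros w Hp. pose proof (q_ge1 w Hp).
  assert (K : forall y y', 0 <= y -> y < y' -> 0 < (INR (snd (cq w)) + INR (fst (cq w)) * y) * (INR (snd (cq w)) + INR (fst (cq w)) * y')).
  { intros. pose proof (den_pos w Hp y H0). pose proof (den_pos w Hp y' ltac:(lra)). apply Rmult_lt_0_compat; lra. }
  assert (P : forall y y', 0 <= y -> y < y' -> 0 < (y' - y) / ((INR (snd (cq w)) + INR (fst (cq w)) * y) * (INR (snd (cq w)) + INR (fst (cq w)) * y'))).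
  { intros. apply Rdiv_lt_0_compat. lra. apply K; lra. }
  destruct (sign_cases (length w)) as [E|E]; [left|right]; intros y y' Hy Hyy;
  pose proof (beta_diff w Hp y y' Hy ltac:(lra)) as D; rewrite E in D;
  pose proof (P y y' Hy Hyy) as P'; unfold Rdiv in *.
  - replace (1 * (y - y')) with (- (y' - y)) in D by ring. rewrite Ropp_mult_distr_l_reverse in D. lra.
  - replace (-1 * (y - y')) with (y' - y) in D by ring. lra.
Qed.

Lemma beta_01 : forall w, posw w -> forall y, 0 <= y <= 1 -> 0 <= beta w y <= 1.
Proof.
  induction w as [|a w IH]; intros Hp y Hy; simpl; auto.
  destruct Hp as [Ha Hp]. apply IH; auto.
  assert (1 <= INR a) by (apply (le_INR 1); lia). split.
  left; apply Rinv_0_lt_compat; lra. rewrite <- Rinv_1. apply Rinv_le_contravar; lra.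
Qed.

Lemma beta_01s : forall w, posw w -> forall y, 0 < y < 1 -> 0 < beta w y < 1.
Proof.
  induction w as [|a w IH]; intros Hp y Hy; simpl; auto.
  destruct Hp as [Ha Hp]. apply IH; auto.
  assert (1 <= INR a) by (apply (le_INR 1); lia). split.
  apply Rinv_0_lt_compat; lra. rewrite <- Rinv_1. apply Rinv_lt_contravar; lra.
Qed.

Lemma beta_app : forall u W y, beta (u ++ W) y = beta W (beta u y).
Proof. induction u; intros; simpl; auto. Qed.


Definition btw (A B x : R) := (A < x < B) \/ (B < x < A).

Lemma beta_surj : forall w, posw w -> forall u v, 0 <= u -> u < v -> v <= 1 ->
  forall x, btw (beta w u) (beta w v) x -> exists y, u < y < v /\ x = beta w y.
Proof.
  induction w as [|a w IH]; intros Hp u v Hu Huv Hv x Hx.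
  - simpl in Hx. exists x. destruct Hx; split; [lra|auto|lra|auto].
  - destruct Hp as [Ha Hp]. simpl in Hx.
    assert (Ha' : 1 <= INR a) by (apply (le_INR 1); lia).
    assert (H1 : 0 < / (INR a + v)) by (apply Rinv_0_lt_compat; lra).
    assert (H2 : / (INR a + v) < / (INR a + u)) by (apply Rinv_lt_contravar; nra).
    assert (H3 : / (INR a + u) <= 1) by (rewrite <- Rinv_1; apply Rinv_le_contravar; lra).
    destruct (IH Hp (/ (INR a + v)) (/ (INR a + u)) ltac:(lra) H2 H3 x) as [y [Hy Ex]].
    { unfold btw in *; tauto. }
    exists (/ y - INR a). assert (0 < y) by lra.
    split.
    + split.
      * assert (/ / (INR a + u) < / y) by (apply Rinv_lt_contravar; [nra|lra]).
        rewrite Rinv_inv in H0. lra.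
      * assert (/ y < / / (INR a + v)) by (apply Rinv_lt_contravar; [nra|lra]).
        rewrite Rinv_inv in H0. lra.
    + simpl. replace (INR a + (/ y - INR a)) with (/ y) by ring. rewrite Rinv_inv. auto.
Qed.

Lemma frac_range : forall r, 0 <= r - IZR (Int_part r) < 1.
Proof. intros r. destruct (base_Int_part r). lra. Qed.

Lemma rem_range : forall c, 0 < c < 1 -> forall k, 0 <= cf_rem c k < 1.
Proof. intros c Hc [|k]; simpl; [lra| apply frac_range]. Qed.

Fixpoint wd (c : R) (k : nat) : list nat :=
  match k with O => nil | S k' => Z.to_nat (cf_a_succ c k') :: wd c k' end.

Lemma digit_ge1 : forall x, 0 < x < 1 -> (1 <= Int_part (/ x))%Z.
Proof.
  intros x Hx. destruct (base_Int_part (/ x)).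
  assert (1 < / x) by (rewrite <- Rinv_1; apply Rinv_lt_contravar; lra).
  assert (0 < IZR (Int_part (/ x))) by lra. apply lt_0_IZR in H2. lia.
Qed.

Lemma wd_rep : forall c, 0 < c < 1 -> forall k, (forall j, (j < k)%nat -> cf_rem c j <> 0) ->
  posw (wd c k) /\ length (wd c k) = k /\ c = beta (wd c k) (cf_rem c k).
Proof.
  intros c Hc. induction k as [|k IH]; intros Hn.
  - simpl. auto.
  - destruct IH as [H1 [H2 H3]]. { intros; apply Hn; lia. }
    pose proof (rem_range c Hc k). assert (cf_rem c k <> 0) by (apply Hn; lia).
    assert (Hx : 0 < cf_rem c k < 1) by lra.
    pose proof (digit_ge1 _ Hx) as Hd.
    assert (E : INR (Z.to_nat (cf_a_succ c k)) = IZR (Int_part (/ cf_rem c k))).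
    { unfold cf_a_succ. rewrite INR_IZR_INZ, Z2Nat.id by lia. reflexivity. }
    repeat split.
    + simpl. unfold cf_a_succ. lia.
    + exact H1.
    + simpl. rewrite H2. reflexivity.
    + simpl wd. simpl beta. simpl cf_rem. rewrite E.
      replace (IZR (Int_part (/ cf_rem c k)) + (/ cf_rem c k - IZR (Int_part (/ cf_rem c k)))) with (/ cf_rem c k) by ring.
      rewrite Rinv_inv. exact H3.
Qed.

Lemma beta0 : forall w, posw w -> beta w 0 = INR (snd (cp w)) / INR (snd (cq w)).
Proof. intros. rewrite beta_mob by (auto; lra). f_equal; ring. Qed.

Lemma irr_rem_nonzero : forall c, 0 < c < 1 -> irrational c -> forall k, cf_rem c k <> 0.
Proof.
  intros c Hc Hirr.
  assert (forall k, forall j, (j < k)%nat -> cf_rem c j <> 0).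
  { induction k as [|k IH]; intros j Hj; [lia|].
    destruct (Nat.eq_dec j k) as [->|]; [|apply IH; lia].
    intros E. destruct (wd_rep c Hc k IH) as [H1 [H2 H3]].
    rewrite E, beta0 in H3 by auto. apply Hirr.
    exists (Z.of_nat (snd (cp (wd c k)))), (Z.of_nat (snd (cq (wd c k)))).
    pose proof (cq_facts _ H1). split; [lia|]. rewrite <- !INR_IZR_INZ. auto. }
  intros k. apply (H (S k)). lia.
Qed.


Lemma IZR_abs_ge1 : forall z, z <> 0%Z -> 1 <= Rabs (IZR z).
Proof.
  intros z Hz. rewrite <- abs_IZR. apply IZR_le. lia.
Qed.

Lemma cyl_rat_bound : forall w, posw w -> forall y, 0 < y < 1 ->
  forall P Q, Q <> 0%Z -> beta w y = IZR P / IZR Q -> INR (snd (cq w)) < Rabs (IZR Q).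
Proof.
  intros w Hp y Hy P Q HQ E.
  set (q := INR (snd (cq w))). set (q' := INR (fst (cq w))). set (p := INR (snd (cp w))).
  pose proof (beta_absdiff w Hp y 0 ltac:(lra) ltac:(lra)) as D.
  rewrite beta0 in D by auto. fold q q' p in D. rewrite E in D.
  pose proof (q_ge1 w Hp) as Hq. fold q in Hq.
  assert (0 <= q') by apply pos_INR.
  replace (q + q' * 0) with q in D by ring. replace (y - 0) with y in D by ring.
  rewrite (Rabs_right y) in D by lra.
  assert (HD1 : y / ((q + q' * y) * q) < / (q * q)).
  { assert (0 <= q' * y) by (apply Rmult_le_pos; lra).
    unfold Rdiv. apply Rle_lt_trans with (y * / (q * q)).
    - apply Rmult_le_compat_l. lra. apply Rinv_le_contravar; nra.
    - rewrite <- (Rmult_1_l (/ (q * q))) at 2. apply Rmult_lt_compat_r; [|lra].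
      apply Rinv_0_lt_compat; nra. }
  assert (HD0 : 0 < y / ((q + q' * y) * q)).
  { apply Rdiv_lt_0_compat. lra. assert (0 <= q' * y) by (apply Rmult_le_pos; lra). nra. }
  assert (HQ' : IZR Q <> 0) by (apply not_0_IZR; auto).
  set (z := (P * Z.of_nat (snd (cq w)) - Q * Z.of_nat (snd (cp w)))%Z).
  assert (Ez : IZR P / IZR Q - p / q = IZR z / (IZR Q * q)).
  { unfold z. rewrite minus_IZR, !mult_IZR, <- !INR_IZR_INZ. fold q p. field. lra. }
  rewrite Ez in D.
  assert (Hz : z <> 0%Z).
  { intros Hz. rewrite Hz in D. unfold Rdiv in D. rewrite Rmult_0_l, Rabs_R0 in D. lra. }
  pose proof (IZR_abs_ge1 z Hz).
  unfold Rdiv in D. rewrite Rabs_mult, Rabs_inv, Rabs_mult, (Rabs_right q) in D by lra.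
  assert (0 < Rabs (IZR Q)) by (apply Rabs_pos_lt; auto).
  assert (/ (Rabs (IZR Q) * q) < / (q * q)).
  { apply Rle_lt_trans with (Rabs (IZR z) * / (Rabs (IZR Q) * q)).
    - rewrite <- (Rmult_1_l (/ _)) at 1. apply Rmult_le_compat_r; [|lra].
      left; apply Rinv_0_lt_compat; nra.
    - rewrite D. exact HD1. }
  destruct (Rlt_or_le q (Rabs (IZR Q))) as [|Hle]; auto.
  assert (/ (q * q) <= / (Rabs (IZR Q) * q)) by (apply Rinv_le_contravar; nra). lra.
Qed.


Definition good (n : nat) (w : list nat) : Prop :=
  match w with nil => False | a :: w' => (n + 2 <= length w)%nat /\ posw w /\
    ln (INR (snd (cq w))) > INR n * (INR (snd (cq w')))^2 * ln (INR (snd (cq w'))) end.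
Definition Uset (n : nat) (x : R) : Prop := exists w, good n w /\ btw (beta w 0) (beta w 1) x.
Definition Gset (x : R) : Prop := forall n, Uset n x.

Lemma between_open : forall A B, open_set (btw A B).
Proof.
  intros A B x Hx.
  assert (Hd : 0 < Rmin (Rabs (x - A)) (Rabs (x - B))).
  { unfold btw in Hx. apply Rmin_pos; apply Rabs_pos_lt; destruct Hx; lra. }
  exists (mkposreal _ Hd). intros y Hy. unfold disc in Hy. simpl in Hy.
  pose proof (Rmin_l (Rabs (x - A)) (Rabs (x - B))).
  pose proof (Rmin_r (Rabs (x - A)) (Rabs (x - B))).
  apply Rabs_def2 in Hy.
  unfold btw in *. destruct Hx as [Hx|Hx]; [left|right].
  - rewrite (Rabs_right (x - A)) in * by lra. rewrite (Rabs_left (x - B)) in * by lra. lra.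
  - rewrite (Rabs_left (x - A)) in * by lra. rewrite (Rabs_right (x - B)) in * by lra. lra.
Qed.

Lemma Uset_open : forall n, open_set (Uset n).
Proof.
  intros n x [w [Hg Hb]]. destruct (between_open _ _ x Hb) as [d Hd].
  exists d. intros y Hy. exists w. split; auto.
Qed.

Lemma good_posw : forall n w, good n w -> posw w.
Proof. intros n [|a w] H; simpl in *; tauto. Qed.

Lemma Uset_rep : forall n x, Uset n x -> exists w y, good n w /\ 0 < y < 1 /\ x = beta w y.
Proof.
  intros n x [w [Hg Hb]].
  destruct (beta_surj w (good_posw _ _ Hg) 0 1 ltac:(lra) ltac:(lra) ltac:(lra) x Hb) as [y [Hy E]].
  exists w, y. auto.
Qed.

Lemma ln_pos : forall x, 1 < x -> 0 < ln x.
Proof. intros. rewrite <- ln_1. apply ln_increasing; lra. Qed.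

Lemma lt_div : forall a b c, 0 < b -> a * b < c -> c / b > a.
Proof.
  intros a b c Hb H. unfold Rgt. apply (Rmult_lt_reg_r b); auto.
  unfold Rdiv. rewrite Rmult_assoc, Rinv_l, Rmult_1_r by lra. auto.
Qed.

Lemma G_sub_S : forall x, Gset x -> S_set x.
Proof.
  intros x HG.
  assert (H01 : 0 < x < 1).
  { destruct (Uset_rep 0 x (HG 0%nat)) as [w [y [Hg [Hy E]]]]. subst x.
    apply beta_01s; auto. eapply good_posw; eauto. }
  split; [exact H01|split].
  - intros [P [Q [HQ E]]].
    destruct (Uset_rep (Z.abs_nat Q) x (HG _)) as [w [y [Hg [Hy Ex]]]].
    pose proof (good_posw _ _ Hg) as Hp.
    assert (Hl : (Z.abs_nat Q + 2 <= length w)%nat) by (destruct w; simpl in Hg; tauto).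
    pose proof (cyl_rat_bound w Hp y Hy P Q HQ (eq_trans (eq_sym Ex) E)) as Hb.
    rewrite Rabs_Zabs, <- Zabs2Nat.id_abs, <- INR_IZR_INZ in Hb.
    apply INR_lt in Hb. destruct (cq_facts w Hp). lia.
  - intros M s0. destruct (INR_unbounded M) as [n0 Hn0].
    set (n := S (Nat.max n0 s0)).
    destruct (Uset_rep n x (HG _)) as [w [y [Hg [Hy Ex]]]].
    pose proof (good_posw _ _ Hg) as Hp.
    destruct w as [|a w']; [simpl in Hg; tauto|].
    destruct Hg as [Hl [_ Hln]]. simpl length in Hl.
    exists (length w'). split; [unfold n in Hl; lia|].
    destruct (cf_beta _ Hp y Hy) as [_ E1].
    destruct Hp as [Ha Hp'].
    assert (Hz : 0 < / (INR a + y) < 1).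
    { assert (1 <= INR a) by (apply (le_INR 1); lia). split.
      apply Rinv_0_lt_compat; lra. rewrite <- Rinv_1. apply Rinv_lt_contravar; lra. }
    destruct (cf_beta _ Hp' _ Hz) as [_ E2].
    unfold cf_q. rewrite Ex. simpl length in E1. rewrite E1. simpl beta. rewrite E2. simpl snd.
    destruct (cq_facts w' Hp') as [Hq _].
    assert (HQ : 2 <= INR (snd (cq w'))) by (apply (le_INR 2); lia).
    assert (HlnQ : 0 < ln (INR (snd (cq w')))) by (apply ln_pos; lra).
    assert (HD : 0 < INR (snd (cq w')) ^ 2 * ln (INR (snd (cq w')))) by (apply Rmult_lt_0_compat; [nra|lra]).
    apply lt_div; auto.
    assert (INR n0 <= INR n) by (apply le_INR; unfold n; lia).
    assert (M * (INR (snd (cq w')) ^ 2 * ln (INR (snd (cq w')))) < INR n * (INR (snd (cq w')) ^ 2 * ln (INR (snd (cq w'))))) by (apply Rmult_lt_compat_r; lra).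
    simpl snd in Hln. simpl fst in Hln. idtac. lra.
Qed.


Definition rr (n : nat) : R := / (INR n ^ (n * n)).

Lemma approx_S : forall al, S_set al -> forall Q, (2 <= Q)%nat ->
  exists n p, (Q <= n)%nat /\ (p <= n)%nat /\ Rabs (al - INR p / INR n) <= rr n.
Proof.
  intros al [H01 [Hirr Hrat]] Q HQ.
  destruct (Hrat 2 Q) as [s [Hs Hr]].
  pose proof (irr_rem_nonzero al H01 Hirr) as Hnz.
  destruct (wd_rep al H01 s (fun j _ => Hnz j)) as [Hp [Hlen Erep]].
  remember (wd al s) as w eqn:Ew. remember (cf_rem al s) as x eqn:Ex.
  assert (Hx : 0 < x < 1) by (pose proof (rem_range al H01 s); pose proof (Hnz s); rewrite <- Ex in *; lra).
  destruct (cf_beta w Hp x Hx) as [_ Eq]. rewrite <- Erep, Hlen in Eq.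
  destruct (cq_facts w Hp) as [F1 [F2 [F3 F4]]].
  set (n := snd (cq w)) in *. set (q' := fst (cq w)) in *. set (p := snd (cp w)).
  exists n, p. split; [lia|]. split.
  - pose proof (beta_01 w Hp 0 ltac:(lra)) as B01. rewrite beta0 in B01 by auto.
    fold n p in B01. assert (0 < INR n) by (apply (lt_INR 0); lia).
    assert (INR p <= INR n).
    { destruct B01 as [_ B]. apply (Rmult_le_compat_r (INR n)) in B; [|lra].
      unfold Rdiv in B. rewrite Rmult_assoc, Rinv_l, Rmult_1_r, Rmult_1_l in B by lra. exact B. }
    apply INR_le; auto.
  -
    assert (Hn : 2 <= INR n) by (apply (le_INR 2); lia).
    assert (Hq' : 0 <= INR q' <= INR n) by (split; [apply pos_INR|apply le_INR; auto]).
    pose proof (digit_ge1 x Hx) as HA. set (A := Int_part (/ x)) in *.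
    assert (HA' : 1 <= IZR A) by (apply IZR_le; auto).
    assert (HxA : x * IZR A <= 1).
    { destruct (base_Int_part (/ x)). fold A in H.
      apply (Rmult_le_compat_l x) in H; [|lra]. rewrite Rinv_r in H by lra. lra. }
    assert (EQ1 : cf_q al (S s) = IZR A * INR n + INR q').
    { unfold cf_q. simpl cf_qq. rewrite Eq. simpl. unfold cf_a_succ. rewrite <- Ex. reflexivity. }
    assert (EQ0 : cf_q al s = INR n) by (unfold cf_q; rewrite Eq; reflexivity).
    rewrite EQ1, EQ0 in Hr.
    assert (HlnQ : 0 < ln (INR n)) by (apply ln_pos; lra).
    assert (HD : 0 < INR n ^ 2 * ln (INR n)) by (apply Rmult_lt_0_compat; [nra|lra]).
    assert (Hr2 : ln (IZR A * INR n + INR q') > 2 * (INR n ^ 2 * ln (INR n))).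
    { apply (Rmult_gt_compat_r (INR n ^ 2 * ln (INR n))) in Hr; auto.
      unfold Rdiv in Hr. rewrite Rmult_assoc, Rinv_l, Rmult_1_r in Hr by lra. exact Hr. }
    set (P := INR n ^ (n * n)).
    assert (HP1 : 1 <= P) by (unfold P; apply pow_R1_Rle; lra).
    assert (HQ1 : P * P < IZR A * INR n + INR q').
    { apply ln_lt_inv. nra. nra.
      replace (P * P) with (INR n ^ (2 * n * n)).
      - rewrite ln_pow by lra. rewrite !mult_INR. simpl INR. lra.
      - unfold P. rewrite <- pow_add. f_equal. lia. }
    pose proof (beta_absdiff w Hp x 0 ltac:(lra) ltac:(lra)) as D.
    rewrite <- Erep, beta0 in D by auto. fold n q' p in D.
    rewrite D. unfold rr. fold P.
    replace (INR n + INR q' * 0) with (INR n) by ring.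
    replace (x - 0) with x by ring. rewrite Rabs_right by lra.
    assert (0 <= INR q' * x) by (apply Rmult_le_pos; lra).
    assert (Hk : x * P * P < 2 * INR n) by nra.
    assert (Hk2 : x * P <= INR n * INR n) by nra.
    apply Rle_trans with (x / (INR n * INR n)).
    + unfold Rdiv. apply Rmult_le_compat_l. lra. apply Rinv_le_contravar; nra.
    + apply (Rmult_le_reg_r (INR n * INR n * P)). nra.
      unfold Rdiv. field_simplify; nra.
Qed.


Lemma rr_pos : forall n, (1 <= n)%nat -> 0 < rr n.
Proof. intros. unfold rr. apply Rinv_0_lt_compat. apply pow_lt. apply (lt_INR 0); lia. Qed.

Lemma rr_mono : forall m n, (1 <= m)%nat -> (m <= n)%nat -> rr n <= rr m.
Proof.
  intros m n Hm Hmn. unfold rr. apply Rinv_le_contravar. apply pow_lt. apply (lt_INR 0); lia.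
  apply Rle_trans with (INR n ^ (m * m)).
  - apply pow_incr. split. apply pos_INR. apply le_INR; auto.
  - apply Rle_pow. apply (le_INR 1); lia. nia.
Qed.

Lemma rr_le_inv : forall n, (1 <= n)%nat -> rr n <= / INR n.
Proof.
  intros n Hn. unfold rr. apply Rinv_le_contravar. apply (lt_INR 0); lia.
  rewrite <- (pow_1 (INR n)) at 1. apply Rle_pow. apply (le_INR 1); lia. nia.
Qed.

Fixpoint psum (f : nat -> R) (n : nat) : R :=
  match n with O => 0 | S n' => psum f n' + f n' end.

Lemma sum_psum : forall f n, sum_f_R0 f n = psum f (S n).
Proof. induction n; simpl in *; [ring|rewrite IHn; ring]. Qed.

Lemma psum_le : forall f g n, (forall i, f i <= g i) -> psum f n <= psum g n.
Proof. induction n; intros; simpl; [lra| pose proof (H n); pose proof (IHn H); lra]. Qed.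

Lemma psum_nonneg : forall f n, (forall i, 0 <= f i) -> 0 <= psum f n.
Proof. induction n; intros; simpl; [lra| pose proof (H n); pose proof (IHn H); lra]. Qed.

Lemma psum_scal : forall f c n, psum (fun i => c * f i) n = c * psum f n.
Proof. induction n; simpl; [ring| rewrite IHn; ring]. Qed.

Lemma psum_shift : forall f K m, psum f (K + m) = psum f K + psum (fun i => f (K + i)%nat) m.
Proof. induction m; simpl. rewrite Nat.add_0_r; ring. rewrite Nat.add_succ_r. simpl. rewrite IHm. ring. Qed.

Lemma psum_mono : forall f n m, (forall i, 0 <= f i) -> (n <= m)%nat -> psum f n <= psum f m.
Proof.
  intros f n m Hf Hnm. replace m with (n + (m - n))%nat by lia. rewrite psum_shift.
  pose proof (psum_nonneg (fun i => f (n + i)%nat) (m - n) (fun i => Hf _)). lra.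
Qed.

Lemma psum_le_lim : forall f l, (forall i, 0 <= f i) -> infinite_sum f l -> forall n, psum f n <= l.
Proof.
  intros f l Hf Hs n.
  assert (G : Un_growing (sum_f_R0 f)) by (intros k; simpl; pose proof (Hf (S k)); lra).
  destruct n.
  - simpl. pose proof (growing_ineq _ _ G Hs 0%nat). simpl in H. pose proof (Hf 0%nat). lra.
  - rewrite <- sum_psum. apply (growing_ineq _ _ G Hs).
Qed.

Lemma cv_le : forall u L B, Un_cv u L -> (forall n, u n <= B) -> L <= B.
Proof.
  intros u L B Hc Hb. destruct (Rle_or_lt L B) as [|H]; auto.
  destruct (Hc (L - B)) as [n Hn]; [lra|].
  specialize (Hn n (le_n _)). unfold Rdist in Hn. apply Rabs_def2 in Hn. specialize (Hb n). lra.
Qed.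

Fixpoint dec (Q : nat) (n : nat) : nat * nat :=
  match n with O => (0%nat, 0%nat)
  | S n' => if Nat.ltb (snd (dec Q n')) (Q + fst (dec Q n')) then (fst (dec Q n'), S (snd (dec Q n')))
            else (S (fst (dec Q n')), 0%nat) end.

Lemma dec_inv : forall Q n, (snd (dec Q n) <= Q + fst (dec Q n))%nat.
Proof.
  induction n; simpl; [lia|]. destruct (Nat.ltb_spec (snd (dec Q n)) (Q + fst (dec Q n))); simpl; lia.
Qed.

Lemma dec_surj : forall Q i p, (p <= Q + i)%nat -> exists n, dec Q n = (i, p).
Proof.
  intros Q.
  assert (Hstart : forall i, exists n, dec Q n = (i, 0%nat)).
  { induction i. exists 0%nat; reflexivity.
    destruct IHi as [n Hn].
    assert (forall p, (p <= Q + i)%nat -> exists m, dec Q m = (i, p)).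
    { induction p; intros Hp. exists n; auto.
      destruct (IHp ltac:(lia)) as [m Hm]. exists (S m). simpl. rewrite Hm. simpl.
      destruct (Nat.ltb_spec p (Q + i)); [reflexivity|lia]. }
    destruct (H (Q + i)%nat (le_n _)) as [m Hm]. exists (S m). simpl. rewrite Hm. simpl.
    destruct (Nat.ltb_spec (Q + i) (Q + i)); [lia|reflexivity]. }
  intros i. destruct (Hstart i) as [n Hn].
  induction p; intros Hp. exists n; auto.
  destruct (IHp ltac:(lia)) as [m Hm]. exists (S m). simpl. rewrite Hm. simpl.
  destruct (Nat.ltb_spec p (Q + i)); [reflexivity|lia].
Qed.

Lemma psum_dec : forall Q (g : nat -> R) n,
  psum (fun k => g (fst (dec Q k))) n =
  psum (fun i => INR (Q + i + 1) * g i) (fst (dec Q n)) + INR (snd (dec Q n)) * g (fst (dec Q n)).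
Proof.
  intros Q g n. induction n.
  - simpl. ring.
  - simpl psum at 1. rewrite IHn. pose proof (dec_inv Q n). simpl dec.
    destruct (Nat.ltb_spec (snd (dec Q n)) (Q + fst (dec Q n))); cbn [fst snd psum].
    + rewrite S_INR. ring.
    + replace (snd (dec Q n)) with (Q + fst (dec Q n))%nat by lia. rewrite !plus_INR. simpl INR. ring.
Qed.

Lemma cdist_line : forall x y, cdist (x, 0) (y, 0) = Rabs (x - y).
Proof.
  intros. unfold cdist. simpl. replace ((x - y) * ((x - y) * 1) + (0 - 0) * ((0 - 0) * 1)) with (Rsqr (x - y)) by (unfold Rsqr; ring).
  apply sqrt_Rsqr_abs.
Qed.

Lemma abs_bounds : forall x r, Rabs x <= r -> - r <= x <= r.
Proof.
  intros x r H. pose proof (RRle_abs x). pose proof (RRle_abs (- x)). rewrite Rabs_Ropp in H1. lra.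
Qed.

Lemma interval_diam : forall c r, 0 < r ->
  is_diam (fun z => exists x, z = (x, 0) /\ Rabs (x - c) <= r) (2 * r).
Proof.
  intros c r Hr. split; [lra|split].
  - intros z w [x [-> Hx]] [y [-> Hy]]. rewrite cdist_line.
    pose proof (abs_bounds _ _ Hx). pose proof (abs_bounds _ _ Hy). apply Rabs_le. lra.
  - intros d' Hd' Hb.
    specialize (Hb (c + r, 0) (c - r, 0)).
    rewrite cdist_line in Hb. replace (c + r - (c - r)) with (2 * r) in Hb by ring.
    rewrite Rabs_right in Hb by lra. apply Hb.
    + exists (c + r). split; auto. replace (c + r - c) with r by ring. rewrite Rabs_right; lra.
    + exists (c - r). split; auto. replace (c - r - c) with (- r) by ring. rewrite Rabs_Ropp, Rabs_right; lra.
Qed.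


Lemma part1 : forall (h : R -> R) (r0 : R), 0 < r0 ->
  (forall x, 0 <= x <= r0 -> 0 <= h x) ->
  forall (N : nat) (l : R), (1 <= N)%nat -> / (INR N ^ (N * N)) <= r0 ->
  infinite_sum (fun k => INR (N + k) * h (/ (INR (N + k) ^ ((N + k) * (N + k))))) l ->
  Hausdorff_zero h (embedC S_set).
Proof.
  intros h r0 Hr0 Hnn N l HN HNr Hs.
  set (u := fun k => INR (N + k) * h (/ (INR (N + k) ^ ((N + k) * (N + k))))) in Hs.
  assert (Hrr : forall n, (N <= n)%nat -> 0 < rr n <= r0).
  { intros n Hn. split. apply rr_pos; lia. apply Rle_trans with (rr N); auto. apply rr_mono; lia. }
  assert (Hg : forall n, (N <= n)%nat -> 0 <= h (rr n)) by (intros n Hn; apply Hnn; pose proof (Hrr n Hn); lra).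
  assert (Hu : forall k, 0 <= u k).
  { intros k. unfold u. apply Rmult_le_pos. apply pos_INR. apply (Hg (N + k)%nat). lia. }
  intros eps Heps. exists 1. split; [lra|]. intros delta [Hd0 Hd1] eta Heta.
  destruct (Hs (eps / 4)) as [K0 HK0]; [lra|].
  destruct (INR_unbounded (2 / delta)) as [K1 HK1].
  set (K := (S K0 + K1 + 2)%nat). set (Q := (N + K)%nat).
  assert (HQ2 : (2 <= Q)%nat) by (unfold Q, K; lia).
  assert (HB : l - psum u K < eps / 4).
  { specialize (HK0 (K - 1)%nat ltac:(unfold K; lia)). rewrite sum_psum in HK0.
    replace (S (K - 1)) with K in HK0 by (unfold K; lia).
    unfold Rdist in HK0. apply Rabs_def2 in HK0. lra. }
  set (B := 2 * (l - psum u K)).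
  set (c := fun k => INR (snd (dec Q k)) / INR (Q + fst (dec Q k))).
  set (d := fun k => 2 * rr (Q + fst (dec Q k))).
  set (A := fun k => fun z : (R * R)%type => exists x, z = (x, 0) /\ Rabs (x - c k) <= rr (Q + fst (dec Q k))).
  set (t := fun k => h (d k / 2)).
  assert (Ht : forall k, t k = h (rr (Q + fst (dec Q k)))).
  { intros k. unfold t, d. f_equal. field. }
  assert (Ht0 : forall k, 0 <= t k) by (intros k; rewrite Ht; apply Hg; unfold Q; lia).
  assert (Hbound : forall n, psum t n <= B).
  { intros n.
    assert (E : psum t n = psum (fun k => h (rr (Q + fst (dec Q k)))) n).
    { clear -Ht. induction n; simpl; [reflexivity| rewrite IHn, Ht; reflexivity]. }
    pose proof (psum_dec Q (fun i => h (rr (Q + i))) n) as PD. cbv beta in PD.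
    rewrite E, PD.
    set (m := fst (dec Q n)). pose proof (dec_inv Q n) as Hinv. fold m in Hinv.
    apply Rle_trans with (psum (fun i => INR (Q + i + 1) * h (rr (Q + i))) (S m)).
    { simpl psum. apply Rplus_le_compat_l. apply Rmult_le_compat_r. apply Hg; unfold Q; lia.
      apply le_INR. lia. }
    apply Rle_trans with (psum (fun i => 2 * u (K + i)%nat) (S m)).
    { apply psum_le. intros i. unfold u.
      replace (N + (K + i))%nat with (Q + i)%nat by (unfold Q; lia). fold (rr (Q + i)).
      rewrite <- Rmult_assoc. apply Rmult_le_compat_r. apply Hg; unfold Q; lia.
      rewrite !plus_INR. simpl INR. assert (1 <= INR Q) by (apply (le_INR 1); lia).
      pose proof (pos_INR i). lra. }
    rewrite psum_scal. unfold B. apply Rmult_le_compat_l; [lra|].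
    pose proof (psum_shift u K (S m)). pose proof (psum_le_lim u l Hu Hs (K + S m)). lra. }
  assert (Hgr : Un_growing (sum_f_R0 t)) by (intros k; simpl; pose proof (Ht0 (S k)); lra).
  assert (Hub : has_ub (sum_f_R0 t)).
  { exists B. intros x [i ->]. rewrite sum_psum. apply Hbound. }
  destruct (growing_cv _ Hgr Hub) as [L HL].
  exists A, d, L. split; [|split; [|split]].
  - intros k. split.
    + apply interval_diam. apply rr_pos. unfold Q; lia.
    + unfold d. apply Rle_lt_trans with (2 * / INR Q).
      * apply Rmult_le_compat_l; [lra|]. apply Rle_trans with (/ INR (Q + fst (dec Q k))).
        apply rr_le_inv; unfold Q; lia. apply Rinv_le_contravar. apply (lt_INR 0); lia. apply le_INR; lia.
      * assert (INR K1 <= INR Q) by (apply le_INR; unfold Q, K; lia).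
        assert (0 < INR Q) by (apply (lt_INR 0); lia).
        assert (2 < delta * INR Q).
        { assert (2 / delta * delta = 2) by (field; lra). nra. }
        apply (Rmult_lt_reg_r (INR Q)); auto. rewrite Rmult_assoc, Rinv_l; lra.
  - intros z [al [Hal ->]].
    destruct (approx_S al Hal Q HQ2) as [n [p [Hn [Hp Ha]]]].
    destruct (dec_surj Q (n - Q) p ltac:(lia)) as [k Hk].
    exists k. unfold A, c. rewrite Hk. simpl. exists al. split; auto.
    replace (Q + (n - Q))%nat with n by lia. exact Ha.
  - exact HL.
  - apply Rle_trans with B. apply (cv_le _ L B HL). intros n; rewrite sum_psum; apply Hbound.
    unfold B. lra.
Qed.


Definition big (w : list nat) : nat :=
  S (S (Z.to_nat (up (exp (INR (length w) * INR (snd (cq w)) ^ 2 * ln (INR (snd (cq w)))))))).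

Lemma ln_nonneg : forall x, 1 <= x -> 0 <= ln x.
Proof. intros x Hx. destruct Hx as [Hx|<-]. left; apply ln_pos; auto. rewrite ln_1; lra. Qed.

Lemma big_good : forall w, posw w -> forall e, (big w <= e)%nat -> forall n, (n + 1 <= length w)%nat ->
  good n (e :: w).
Proof.
  intros w Hp e He n Hn. simpl. split; [lia|]. split; [split; [unfold big in He; lia|auto]|].
  set (q := INR (snd (cq w))). set (X := INR (length w) * q ^ 2 * ln q).
  pose proof (q_ge1 w Hp) as Hq. fold q in Hq.
  assert (HE : exp X < INR e).
  { destruct (archimed (exp X)) as [H1 _]. pose proof (exp_pos X).
    assert (0 < up (exp X))%Z by (apply lt_IZR; lra).
    apply Rlt_le_trans with (IZR (up (exp X))); auto.
    apply Rle_trans with (INR (big w)); [|apply le_INR; auto].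
    unfold big. fold q X. rewrite !S_INR, INR_IZR_INZ, Z2Nat.id by lia. pose proof (pos_INR 0). lra. }
  assert (Hqe : INR e <= INR (e * snd (cq w) + fst (cq w))).
  { apply le_INR. destruct (cq_facts w Hp) as [_ [H2 _]]. nia. }
  assert (Hl : X < ln (INR (e * snd (cq w) + fst (cq w)))).
  { rewrite <- (ln_exp X) at 1. apply ln_increasing. apply exp_pos. lra. }
  assert (INR n <= INR (length w)) by (apply le_INR; lia).
  assert (0 <= q ^ 2 * ln q) by (apply Rmult_le_pos; [nra|apply ln_nonneg; lra]).
  unfold X in Hl. fold q. apply Rlt_gt. apply Rle_lt_trans with (INR (length w) * q ^ 2 * ln q); [|exact Hl].
  assert (INR n * (q^2 * ln q) <= INR (length w) * (q^2 * ln q)) by (apply Rmult_le_compat_r; auto).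
  simpl in *. nra.
Qed.

Fixpoint Wseq (w0 : list nat) (ch : nat -> list nat -> nat) (j : nat) : list nat :=
  match j with O => w0 | S j' => ch j' (Wseq w0 ch j') :: Wseq w0 ch j' end.

Definition lo w := Rmin (beta w 0) (beta w 1).
Definition hi w := Rmax (beta w 0) (beta w 1).

Lemma inside : forall w, posw w -> forall y, 0 < y < 1 -> lo w < beta w y < hi w.
Proof.
  intros w Hp y Hy. unfold lo, hi.
  destruct (beta_mono w Hp) as [M|M].
  - pose proof (M 0 y ltac:(lra) ltac:(lra)). pose proof (M y 1 ltac:(lra) ltac:(lra)).
    rewrite Rmin_left, Rmax_right by lra. lra.
  - pose proof (M 0 y ltac:(lra) ltac:(lra)). pose proof (M y 1 ltac:(lra) ltac:(lra)).
    rewrite Rmin_right, Rmax_left by lra. lra.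
Qed.

Lemma lo_hi : forall w, lo w <= hi w.
Proof. intros. unfold lo, hi. pose proof (Rmin_l (beta w 0) (beta w 1)). pose proof (Rmax_l (beta w 0) (beta w 1)). lra. Qed.

Lemma nest : forall w, posw w -> forall e, (2 <= e)%nat -> lo w < lo (e :: w) /\ hi (e :: w) < hi w.
Proof.
  intros w Hp e He.
  assert (2 <= INR e) by (apply (le_INR 2); lia).
  assert (Y0 : 0 < / (INR e + 0) < 1).
  { split. apply Rinv_0_lt_compat; lra. rewrite <- Rinv_1. apply Rinv_lt_contravar; lra. }
  assert (Y1 : 0 < / (INR e + 1) < 1).
  { split. apply Rinv_0_lt_compat; lra. rewrite <- Rinv_1. apply Rinv_lt_contravar; lra. }
  pose proof (inside w Hp _ Y0). pose proof (inside w Hp _ Y1).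
  unfold lo at 2, hi at 1. simpl beta. split.
  - apply Rmin_glb_lt; lra.
  - apply Rmax_lub_lt; lra.
Qed.


Lemma W_pos (w0 : list nat) (ch : nat -> list nat -> nat) (Hw0 : posw w0) (Hch : forall j w, (big w <= ch j w)%nat) : forall j, posw (Wseq w0 ch j).
Proof.
  induction j; simpl; auto. split; auto. specialize (Hch j (Wseq w0 ch j)). unfold big in Hch. lia.
Qed.

Lemma W_len (w0 : list nat) (ch : nat -> list nat -> nat) : forall j, length (Wseq w0 ch j) = (length w0 + j)%nat.
Proof. induction j; simpl; [lia|]. rewrite IHj. lia. Qed.

Lemma W_nest (w0 : list nat) (ch : nat -> list nat -> nat) (Hw0 : posw w0) (Hch : forall j w, (big w <= ch j w)%nat) : forall j, lo (Wseq w0 ch j) < lo (Wseq w0 ch (S j)) /\ hi (Wseq w0 ch (S j)) < hi (Wseq w0 ch j).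
Proof.
  intros j. assert (H2 : (2 <= ch j (Wseq w0 ch j))%nat) by (specialize (Hch j (Wseq w0 ch j)); unfold big in Hch; lia). exact (nest (Wseq w0 ch j) (W_pos w0 ch Hw0 Hch j) _ H2).
Qed.

Lemma lo_mono (w0 : list nat) (ch : nat -> list nat -> nat) (Hw0 : posw w0) (Hch : forall j w, (big w <= ch j w)%nat) : forall j k, (j <= k)%nat -> lo (Wseq w0 ch j) <= lo (Wseq w0 ch k).
Proof.
  intros j k Hjk. induction Hjk; [lra|]. pose proof (W_nest w0 ch Hw0 Hch m). lra.
Qed.

Lemma hi_mono (w0 : list nat) (ch : nat -> list nat -> nat) (Hw0 : posw w0) (Hch : forall j w, (big w <= ch j w)%nat) : forall j k, (j <= k)%nat -> hi (Wseq w0 ch k) <= hi (Wseq w0 ch j).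
Proof.
  intros j k Hjk. induction Hjk; [lra|]. pose proof (W_nest w0 ch Hw0 Hch m). lra.
Qed.

Lemma construct (w0 : list nat) (ch : nat -> list nat -> nat) (Hw0 : posw w0) (Hch : forall j w, (big w <= ch j w)%nat) : exists al, Gset al /\ forall j, lo (Wseq w0 ch j) <= al <= hi (Wseq w0 ch j).
Proof.
  set (u := fun j => lo (Wseq w0 ch j)).
  assert (Gr : Un_growing u) by (intros j; unfold u; pose proof (W_nest w0 ch Hw0 Hch j); lra).
  assert (Ub : has_ub u).
  { exists (hi (Wseq w0 ch 0)). intros x [i ->]. unfold u. pose proof (lo_hi (Wseq w0 ch i)). pose proof (hi_mono w0 ch Hw0 Hch 0 i ltac:(lia)). lra. }
  destruct (growing_cv u Gr Ub) as [al Hal].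
  assert (Hin : forall j, lo (Wseq w0 ch j) <= al <= hi (Wseq w0 ch j)).
  { intros j. split.
    - apply (growing_ineq u al Gr Hal j).
    - apply (cv_le u al); auto. intros k. unfold u.
      pose proof (lo_mono w0 ch Hw0 Hch k (Nat.max k j) ltac:(lia)). pose proof (hi_mono w0 ch Hw0 Hch j (Nat.max k j) ltac:(lia)).
      pose proof (lo_hi (Wseq w0 ch (Nat.max k j))). lra. }
  exists al. split; auto.
  intros n. exists (Wseq w0 ch (S (S n))). split.
  - assert (Hl : (n + 1 <= length (Wseq w0 ch (S n)))%nat) by (rewrite W_len; lia). exact (big_good (Wseq w0 ch (S n)) (W_pos w0 ch Hw0 Hch _) _ (Hch _ _) n Hl).
  - pose proof (W_nest w0 ch Hw0 Hch (S (S n))). pose proof (Hin (S (S (S n)))).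
    assert (lo (Wseq w0 ch (S (S n))) < al < hi (Wseq w0 ch (S (S n)))) by lra.
    unfold lo, hi, btw in *. destruct (Rle_dec (beta (Wseq w0 ch (S (S n))) 0) (beta (Wseq w0 ch (S (S n))) 1)).
    + rewrite Rmin_left, Rmax_right in H1 by lra. left; lra.
    + rewrite Rmin_right, Rmax_left in H1 by lra. right; lra.
Qed.


Lemma first_zero : forall c K, (forall j, (j < K)%nat -> cf_rem c j <> 0) \/
  (exists k, (k < K)%nat /\ cf_rem c k = 0 /\ forall j, (j < k)%nat -> cf_rem c j <> 0).
Proof.
  intros c K. induction K.
  - left. intros; lia.
  - destruct IHK as [H|H].
    + destruct (Req_dec (cf_rem c K) 0) as [E|E].
      * right. exists K. split; [lia|]. auto.
      * left. intros j Hj. destruct (Nat.eq_dec j K) as [->|]; auto. apply H; lia.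
    + right. destruct H as [k [Hk Hr]]. exists k. split; [lia|auto].
Qed.

Lemma init_word : forall c eps, 0 < c < 1 -> 0 < eps ->
  exists w0, posw w0 /\ forall t, 0 <= t <= 1 -> Rabs (beta w0 t - c) < eps.
Proof.
  intros c eps Hc He.
  destruct (INR_unbounded (/ eps)) as [K0 HK0]. set (K := S K0).
  assert (HK : / INR K < eps).
  { assert (0 < / eps) by (apply Rinv_0_lt_compat; lra).
    assert (INR K0 <= INR K) by (apply le_INR; unfold K; lia).
    rewrite <- (Rinv_inv eps). apply Rinv_lt_contravar; nra. }
  assert (HK1 : 1 <= INR K) by (apply (le_INR 1); unfold K; lia).
  destruct (first_zero c K) as [Hnz|[k [Hk [Hz Hnz]]]].
  - destruct (wd_rep c Hc K Hnz) as [Hp [Hl Er]].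
    exists (wd c K). split; auto. intros t Ht.
    pose proof (rem_range c Hc K).
    rewrite Er at 2. eapply Rle_lt_trans. apply beta_lip; auto; lra.
    destruct (cq_facts _ Hp) as [Hq _]. rewrite Hl in Hq.
    assert (INR K <= INR (snd (cq (wd c K)))) by (apply le_INR; auto).
    assert (Rabs (t - cf_rem c K) <= 1) by (apply Rabs_le; lra).
    apply Rle_lt_trans with (/ INR K); auto.
    unfold Rdiv. apply Rle_trans with (1 * / INR (snd (cq (wd c K)))).
    apply Rmult_le_compat_r; auto. left; apply Rinv_0_lt_compat; lra.
    rewrite Rmult_1_l. apply Rinv_le_contravar; lra.
  - destruct (wd_rep c Hc k Hnz) as [Hp [Hl Er]]. rewrite Hz in Er.
    exists (K :: wd c k). split. split; [unfold K; lia|auto].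
    intros t Ht. cbn [beta]. rewrite Er at 2.
    assert (Hy : 0 < / (INR K + t)) by (apply Rinv_0_lt_compat; lra).
    eapply Rle_lt_trans. apply beta_lip; auto; lra.
    pose proof (q_ge1 _ Hp).
    replace (/ (INR K + t) - 0) with (/ (INR K + t)) by ring. rewrite Rabs_right by lra.
    apply Rle_lt_trans with (/ INR K); auto.
    apply Rle_trans with (/ (INR K + t)).
    + unfold Rdiv. rewrite <- (Rmult_1_r (/ (INR K + t))) at 2. apply Rmult_le_compat_l; [lra|].
      rewrite <- Rinv_1. apply Rinv_le_contravar; lra.
    + apply Rinv_le_contravar; lra.
Qed.

Lemma part2 : exists G : R -> Prop,
     (forall x, G x -> S_set x) /\ (forall x, G x -> 0 < x < 1) /\
     is_G_delta G /\ dense_in_01 G.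
Proof.
  exists Gset. split; [exact G_sub_S|]. split; [intros x Hx; apply (G_sub_S x Hx)|]. split.
  - exists Uset. split; [apply Uset_open|]. intros x; unfold Gset; tauto.
  - intros a b Ha Hab Hb.
    destruct (init_word ((a + b) / 2) ((b - a) / 2) ltac:(lra) ltac:(lra)) as [w0 [Hp Hw]].
    destruct (construct w0 (fun _ w => big w) Hp (fun _ _ => le_n _)) as [al [HG Hin]].
    exists al. split; auto. specialize (Hin 0%nat). simpl in Hin. unfold lo, hi in Hin.
    pose proof (Hw 0 ltac:(lra)). pose proof (Hw 1 ltac:(lra)).
    apply Rabs_def2 in H. apply Rabs_def2 in H0.
    assert (a < Rmin (beta w0 0) (beta w0 1)) by (apply Rmin_glb_lt; lra).
    assert (Rmax (beta w0 0) (beta w0 1) < b) by (apply Rmax_lub_lt; lra).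
    lra.
Qed.

Definition inC (A B x : R) : bool :=
  if Rle_dec (Rmin A B) x then if Rle_dec x (Rmax A B) then true else false else false.

Lemma disjoint4 : forall w, posw w -> forall t1 t2 t3 t4, 0 < t4 -> t4 < t3 -> t3 < t2 -> t2 < t1 ->
  forall x, Rmin (beta w t1) (beta w t2) <= x <= Rmax (beta w t1) (beta w t2) ->
  Rmin (beta w t3) (beta w t4) <= x <= Rmax (beta w t3) (beta w t4) -> False.
Proof.
  intros w Hp t1 t2 t3 t4 H4 H43 H32 H21 x X1 X2.
  destruct (beta_mono w Hp) as [M|M].
  - pose proof (M t2 t1 ltac:(lra) H21). pose proof (M t3 t2 ltac:(lra) H32). pose proof (M t4 t3 ltac:(lra) H43).
    rewrite Rmin_right, Rmax_left in X1 by lra. rewrite Rmin_right, Rmax_left in X2 by lra. lra.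
  - pose proof (M t2 t1 ltac:(lra) H21). pose proof (M t3 t2 ltac:(lra) H32). pose proof (M t4 t3 ltac:(lra) H43).
    rewrite Rmin_left, Rmax_right in X1 by lra. rewrite Rmin_left, Rmax_right in X2 by lra. lra.
Qed.

Lemma part3 : ~ countable_set S_set.
Proof.
  intros [f Hf].
  set (ch := fun j w => let d := big w in
     if inC (beta (d :: w) 0) (beta (d :: w) 1) (f j) then (d + 2)%nat else d).
  assert (Hch : forall j w, (big w <= ch j w)%nat).
  { intros j w. unfold ch. destruct (inC _ _ _); lia. }
  destruct (construct nil ch I Hch) as [al [HG Hin]].
  destruct (Hf al (G_sub_S al HG)) as [j Hj].
  specialize (Hin (S j)). simpl Wseq in Hin.
  set (w := Wseq nil ch j) in *.
  assert (Hp : posw w) by (apply (W_pos nil ch I Hch)).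
  unfold lo, hi in Hin. unfold ch in Hin. set (d := big w) in *.
  assert (Hd : 2 <= INR d) by (apply (le_INR 2); unfold d, big; lia).
  unfold inC in Hin. cbn [beta] in Hin.
  destruct (Rle_dec (Rmin (beta w (/ (INR d + 0))) (beta w (/ (INR d + 1)))) (f j)) as [L1|L1];
  [destruct (Rle_dec (f j) (Rmax (beta w (/ (INR d + 0))) (beta w (/ (INR d + 1))))) as [L2|L2]|].
  - rewrite plus_INR in Hin. simpl INR in Hin. rewrite Hj in L1, L2.
    apply (disjoint4 w Hp (/ (INR d + 0)) (/ (INR d + 1)) (/ (INR d + (1 + 1) + 0)) (/ (INR d + (1 + 1) + 1))) with al.
    + apply Rinv_0_lt_compat; lra.
    + apply Rinv_lt_contravar; nra.
    + apply Rinv_lt_contravar; nra.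
    + apply Rinv_lt_contravar; nra.
    + lra.
    + exact Hin.
  - apply L2. rewrite Hj. lra.
  - apply L1. rewrite Hj. lra.
Qed.


Theorem proposition1 (h : R -> R) (r0 : R) :
  0 < r0 ->
  (forall x y, 0 <= x <= r0 -> 0 <= y <= r0 -> x < y -> h x < h y) ->
  (forall x, 0 <= x <= r0 -> forall eps, 0 < eps -> exists del, 0 < del /\
     forall y, 0 <= y <= r0 -> Rabs (y - x) < del -> Rabs (h y - h x) < eps) ->
  (forall x, 0 <= x <= r0 -> 0 <= h x) ->
  h 0 = 0 ->
  (exists (N : nat) (l : R), (1 <= N)%nat /\
     / (INR N ^ (N * N)) <= r0 /\
     infinite_sum
       (fun k => INR (N + k) * h (/ (INR (N + k) ^ ((N + k) * (N + k))))) l) ->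
  Hausdorff_zero h (embedC S_set) /\
  (exists G : R -> Prop,
     (forall x, G x -> S_set x) /\ (forall x, G x -> 0 < x < 1) /\
     is_G_delta G /\ dense_in_01 G) /\
  ~ countable_set S_set.
Proof.
  intros Hr0 _ _ Hnn _ [N [l [HN [HNr Hs]]]].
  split; [eapply part1; eauto|]. split; [exact part2|exact part3].
Qed.
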